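(* Let $(G,c,\{r_1,\dots,r_R\},X)$ be an instance of \textsc{Multi-Rooted Directed Steiner Tree} with $G$ planar. Let $T=F\cup\bigcup_{j=1}^q T_{p_j}$ be a multi-rooted partial arborescence in $G$, where $T_{p_j}$ is a partial arborescence rooted at $r_{p_j}$, and let $C_1,\dots,C_h$ be the weakly connected components of $G\setminus T$. Let $I_{C_1},\dots,I_{C_h}$ be the subinstances induced by $(G,T,C_1,\dots,C_h)$, and let $\mathcal F_{C_i}$ be a feasible solution for $I_{C_i}$. Let $\mathcal F\subseteq E(G)$ be the set of edges of $G$ corresponding to $(E(T)\setminus F)\cup\bigcup_{i=1}^h\mathcal F_{C_i}$. Then $\mathcal F$ is a feasible solution for the instance, and $\mathrm{cost}(\mathcal F)=\mathrm{cost}(T\setminus F)+\sum_{i=1}^h\mathrm{cost}(\mathcal F_{C_i})$.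
   Context: MR-DST: digraph $G=(V,E)$ (parallel edges allowed) with costs $c_e\ge0$, roots $r_1,\dots,r_R$, terminals $X\subseteq V\setminus\{r_1,\dots,r_R\}$; feasible $F\subseteq E$: every terminal is reachable from some root via edges of $F$; cost $\sum_{e\in F}c_e$. A partial arborescence rooted at $r$ is a subgraph containing $r$ that is a directed tree oriented away from $r$. A multi-rooted partial arborescence is a subgraph $T=F\cup\bigcup_{j=1}^q T_{i_j}$ where $T_{i_1},\dots,T_{i_q}$ are vertex-disjoint partial arborescences rooted at roots $r_{i_1},\dots,r_{i_q}$, $F$ is a set of edges not in any $T_{i_j}$ with both endpoints in $\bigcup_j V(T_{i_j})$, and $T$ is weakly connected and contains no cycle in the undirected sense. $\mathrm{cost}(T\setminus F)$ is the total cost of edges of $T$ not in $F$. Induced subinstances: contract $T$ into a single new vertex $r_T$ to get $G_{\mathrm{contract}}$ (edges inherit costs from their originals in $G$); for each $i$, $I_{C_i}=(G_{\mathrm{contract}}[C_i\cup\{r_T\}],c,\{r_T\}\cup(C_i\cap(\{r_1,\dots,r_R\}\setminus\{r_{p_1},\dots,r_{p_q}\})),C_i\cap X)$. $G\setminus T$ deletes $T$'s vertices and incident edges; weakly connected components are components of the underlying undirected graph. *)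

(* Defs.v *)
From mathcomp Require Import all_boot all_order all_algebra.
Set Implicit Arguments. Unset Strict Implicit. Unset Printing Implicit Defensive.
Import Order.TTheory GRing.Theory Num.Theory.

(* A digraph with parallel edges: finite vertex type V, finite edge type E,
   with endpoint maps src (tail) and tgt (head). *)
Section Graphs.
Variables (V E : finType) (src tgt : E -> V).

Definition drel (F : {set E}) : rel V :=
  fun u v => [exists e in F, (src e == u) && (tgt e == v)].

Definition urel (F : {set E}) : rel V :=
  fun u v => [exists e in F, ((src e == u) && (tgt e == v))
                          || ((src e == v) && (tgt e == u))].

Definition feasible (Eg : {set E}) (roots X : {set V}) (F : {set E}) : Prop :=
  F \subset Eg /\ forall x, x \in X -> exists2 r, r \in roots & connect (drel F) r x.

Definition cost (R : numDomainType) (c : E -> R) (F : {set E}) : R :=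
  (\sum_(e in F) c e)%R.

Definition partial_arb (r : V) (VA : {set V}) (EA : {set E}) : Prop :=
  [/\ r \in VA,
      forall e, e \in EA -> (src e \in VA) && (tgt e \in VA),
      forall e, e \in EA -> tgt e != r,
      forall v, v \in VA -> v != r -> #|[set e in EA | tgt e == v]| = 1
    & forall v, v \in VA -> connect (drel EA) r v].

(* An undirected cycle in the edge set F: distinct edges e_1..e_k (k >= 1)
   and distinct vertices v_0..v_{k-1}, e_i joining v_{i-1} and v_i (indices mod k). *)
Definition has_ucycle (F : {set E}) : Prop :=
  exists (es : seq E) (vs : seq V),
    [/\ 0 < size es, size vs = size es, uniq es, uniq vs
      & all (fun e => e \in F) es &&
        all (fun t : E * (V * V) =>
               ((src t.1 == t.2.1) && (tgt t.1 == t.2.2))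
               || ((src t.1 == t.2.2) && (tgt t.1 == t.2.1)))
            (zip es (zip vs (rot 1 vs)))].

Definition VT (P : {set V}) (VA : V -> {set V}) : {set V} := \bigcup_(p in P) VA p.
Definition ET (P : {set V}) (EA : V -> {set E}) (F : {set E}) : {set E} :=
  F :|: \bigcup_(p in P) EA p.

(* Multi-rooted partial arborescence: the roots used are P ⊆ Rt (nonempty),
   T_p = (VA p, EA p) for p ∈ P. *)
Definition multi_rooted_parb (Rt P : {set V}) (VA : V -> {set V})
    (EA : V -> {set E}) (F : {set E}) : Prop :=
  [/\ P \subset Rt, P != set0,
      forall p, p \in P -> partial_arb p (VA p) (EA p),
      forall p q, p \in P -> q \in P -> p != q -> [disjoint VA p & VA q]
    & forall p, p \in P -> [disjoint F & EA p]] /\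
  [/\
      forall e, e \in F -> (src e \in VT P VA) && (tgt e \in VT P VA),
      forall u v, u \in VT P VA -> v \in VT P VA -> connect (urel (ET P EA F)) u v
    & ~ has_ucycle (ET P EA F)].

(* Edges of G \ T (T given by its vertex set W) *)
Definition minus_edges (W : {set V}) : {set E} :=
  [set e | (src e \notin W) && (tgt e \notin W)].

Definition components (W : {set V}) : {set {set V}} :=
  [set [set v | (v \notin W) && connect (urel (minus_edges W)) u v] | u in ~: W].

(* Contraction of W into the new vertex r_T = None *)
Definition contr (W : {set V}) (v : V) : option V :=
  if v \in W then None else Some v.
Definition contr_src (W : {set V}) (e : E) : option V := contr W (src e).
Definition contr_tgt (W : {set V}) (e : E) : option V := contr W (tgt e).

(* Edges of G_contract[C ∪ {r_T}]: edges of G whose endpoints lie in C ∪ W,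
   excluding those with both endpoints in W (these disappear under contraction). *)
Definition induced_sub_edges (W C : {set V}) : {set E} :=
  [set e | ((src e \in C) || (src e \in W)) && ((tgt e \in C) || (tgt e \in W))
           && ~~ ((src e \in W) && (tgt e \in W))].

End Graphs.

(* Feasibility for the induced subinstance I_C (vertex type option V,
   None = r_T, edges identified with their originals in G). *)
Definition sub_feasible (V E : finType) (src tgt : E -> V) (W C Rt P X : {set V}) (FC : {set E}) : Prop :=
  @feasible (option V) E (contr_src src W) (contr_tgt tgt W) (induced_sub_edges src tgt W C)
    (None |: [set Some v | v in C :&: (Rt :\: P)])
    [set Some v | v in C :&: X] FC.

(* Main.v *)
Require Import Defs.
From mathcomp Require Import all_boot all_order all_algebra.
Import Order.TTheory GRing.Theory Num.Theory.

Lemma connect_indP (T : finType) (e : rel T) (Q : T -> Prop) :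
  (forall a b, Q a -> e a b -> Q b) -> forall a b, connect e a b -> Q a -> Q b.
Proof.
move=> H a b /connectP[p pth ->]; elim: p a pth => //= y p IH a /andP[eay pth] Qa.
by apply: (IH y pth); apply: H eay.
Qed.

Lemma drel_mono (V E : finType) (src tgt : E -> V) (A B : {set E}) :
  A \subset B -> forall u v, connect (drel src tgt A) u v -> connect (drel src tgt B) u v.
Proof.
move=> sAB; apply: connect_sub => u v /existsP[e /andP[eA h]].
by apply: connect1; apply/existsP; exists e; rewrite (subsetP sAB e eA).
Qed.

Lemma urel_sym (V E : finType) (src tgt : E -> V) A : symmetric (urel src tgt A).
Proof.
move=> u v; apply/existsP/existsP => -[e /andP[eA h]]; exists e;
  by rewrite eA /= orbC.
Qed.

Theorem lemma4 (R : realFieldType) (V E : finType) (src tgt : E -> V)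
  (c : E -> R) (Rt X : {set V})
  (P : {set V}) (VA : V -> {set V}) (EA : V -> {set E}) (F : {set E})
  (FC : {set V} -> {set E}) :
  (forall e, (0 <= c e)%R) ->
  [disjoint X & Rt] ->
  multi_rooted_parb src tgt Rt P VA EA F ->
  (forall C, C \in components src tgt (VT P VA) ->
     sub_feasible src tgt (VT P VA) C Rt P X (FC C)) ->
  let calF := (ET P EA F :\: F) :|: \bigcup_(C in components src tgt (VT P VA)) FC C in
  feasible src tgt [set: E] Rt X calF /\
  cost c calF = (cost c (ET P EA F :\: F)
                 + \sum_(C in components src tgt (VT P VA)) cost c (FC C))%R.
Proof.
move=> _ _ [[sPR _ arb _ dFE] _] subF calF.
set W := VT P VA.
set comps := components src tgt W.
set ur := urel src tgt (minus_edges src tgt W).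
have csym : connect_sym ur by apply/sym_connect_sym/urel_sym.
have compP : forall C, C \in comps -> exists2 u, u \notin W &
    C = [set v | (v \notin W) && connect ur u v].
  by move=> C /imsetP[u]; rewrite inE => uW ->; exists u.
have compW : forall C v, C \in comps -> v \in C -> v \notin W.
  by move=> C v /compP[u _ ->]; rewrite inE => /andP[].
have compU : forall C1 C2 v, C1 \in comps -> C2 \in comps -> v \in C1 -> v \in C2 -> C1 = C2.
  move=> C1 C2 v /compP[u1 _ ->] /compP[u2 _ ->]; rewrite !inE => /andP[_ c1] /andP[_ c2].
  apply/setP => w; rewrite !inE; congr (_ && _).
  apply/idP/idP => h.
    by apply: connect_trans h; apply: connect_trans c2 _; rewrite csym.
  by apply: connect_trans h; apply: connect_trans c1 _; rewrite csym.
have FCsub : forall C, C \in comps -> FC C \subset induced_sub_edges src tgt W C.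
  by move=> C /subF[].
have FCU : forall C1 C2 e, C1 \in comps -> C2 \in comps -> e \in FC C1 -> e \in FC C2 -> C1 = C2.
  move=> C1 C2 e h1 h2 /(subsetP (FCsub _ h1)) + /(subsetP (FCsub _ h2)).
  rewrite !inE.
  case sW: (src e \in W); case tW: (tgt e \in W); rewrite ?orbF ?orbT //= ?andbT.
  - by move=> t1 t2; apply: (compU _ _ _ h1 h2 t1 t2).
  - by move=> s1 s2; apply: (compU _ _ _ h1 h2 s1 s2).
  - by move=> /andP[s1 _] /andP[s2 _]; apply: (compU _ _ _ h1 h2 s1 s2).
have EAW : forall p e, p \in P -> e \in EA p -> (src e \in W) && (tgt e \in W).
  move=> p e pP eE; have [_ h _ _ _] := arb p pP; case/andP: (h e eE) => s t.
  by apply/andP; split; apply/bigcupP; exists p.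
have ETsub : forall e, e \in ET P EA F :\: F -> exists2 p, p \in P & e \in EA p.
  move=> e; rewrite !inE => /andP[eF]; rewrite (negbTE eF) /= => /bigcupP[p pP ?].
  by exists p.
have EAcal : forall p, p \in P -> EA p \subset calF.
  move=> p pP; apply/subsetP => e eE; rewrite !inE; apply/orP; left.
  have := dFE p pP; rewrite disjoint_sym => /disjointFr ->; last exact: eE.
  by rewrite /=; apply/bigcupP; exists p.
have reachW : forall v, v \in W -> exists2 r, r \in Rt & connect (drel src tgt calF) r v.
  move=> v /bigcupP[p pP vV]; exists p; first exact: (subsetP sPR).
  have [_ _ _ _ h] := arb p pP; exact: (@drel_mono _ _ src tgt _ _ (EAcal p pP) _ _ (h v vV)).
split.
  split; first exact: subsetT.
  move=> x xX.
  case xW: (x \in W); first exact: reachW.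
  pose C := [set v | (v \notin W) && connect ur x v].
  have Cc : C \in comps by apply/imsetP; exists x; rewrite ?inE ?xW.
  have xC : x \in C by rewrite inE xW connect0.
  have FCc : FC C \subset calF.
    by apply/subsetP => e eC; rewrite inE; apply/orP; right; apply/bigcupP; exists C.
  have [_ /(_ (Some x))] := subF C Cc.
  case. by apply/imsetP; exists x; rewrite // inE xC.
  move=> r' r'R conn.
  pose Q (a : option V) := if a is Some v then
     exists2 r, r \in Rt & connect (drel src tgt calF) r v else True.
  have : Q (Some x); last by [].
  apply: (@connect_indP _ _ Q _ _ _ conn).
    move=> a b Qa /existsP[e /andP[eF /andP[/eqP ha /eqP hb]]].
    case: b hb => [v|] //; rewrite /contr_tgt /contr; case: ifP => // tW [tv].
    have edge : drel src tgt calF (src e) v.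
      by apply/existsP; exists e; rewrite (subsetP FCc e eF) -tv !eqxx.
    move: ha Qa; rewrite /contr_src /contr; case: ifP => sW <- Qa.
      have [r rR cr] := reachW _ sW; exists r => //.
      by apply: connect_trans cr (connect1 edge).
    have [r rR cr] := Qa; exists r => //.
    by apply: connect_trans cr (connect1 edge).
  move: r'R; rewrite !inE => /orP[/eqP -> //|/imsetP[r]].
  rewrite !inE => /andP[_ /andP[_ rR]] ->; exists r => //.
pose G C := if C \in comps then FC C else set0.
have bigG : \bigcup_(C in comps) FC C = \bigcup_C G C.
  apply/setP => e; apply/bigcupP/bigcupP => [[C Cc eC]|[C _]].
    by exists C => //; rewrite /G Cc.
  by rewrite /G; case: ifP => Cc eC; [exists C | rewrite inE in eC].
rewrite /cost /calF (@eq_bigl _ _ _ _ _ _ [predU (ET P EA F :\: F) & \bigcup_(C in comps) FC C]); last by move=> e; rewrite !inE.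
rewrite bigU /=; last first.
  rewrite -setI_eq0; apply/eqP/setP => e; rewrite !inE.
  apply/negbTE; apply/negP => /andP[/andP[eF eT] /bigcupP[C Cc eC]].
  have [p pP eE] : exists2 p, p \in P & e \in EA p by apply: ETsub; rewrite !inE eF eT.
  have := subsetP (FCsub C Cc) e eC; rewrite inE.
  by case/andP: (EAW p e pP eE) => -> ->; rewrite andbF.
congr (_ + _)%R.
rewrite bigG partition_disjoint_bigcup.
  rewrite [RHS]big_mkcond /=; apply: eq_bigr => C _.
  by rewrite /G; case: ifP => // _; rewrite big_set0.
move=> C1 C2 neq; rewrite /G -setI_eq0; apply/eqP/setP => e; rewrite inE [in RHS]inE.
case: ifP => h1; last by rewrite inE.
case: ifP => h2; last by rewrite inE andbF.
apply/negbTE/negP => /andP[e1 e2]; move/eqP: neq; apply; exact: (FCU _ _ _ h1 h2 e1 e2).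
Qed.
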